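(* Let $m,n,\beta\geq 1$ be integers and let $A\in\mathbb{C}^{m\times\beta}$, $B\in\mathbb{C}^{n\times\beta}$ be nonzero. Then \[ AA^*\otimes BB^* \;\succcurlyeq\; \frac{1}{\min(\operatorname{rk} AA^*,\operatorname{rk} BB^* )}\,\mathrm{vec}(BA^T)\,\mathrm{vec}(BA^T)^* \;\succcurlyeq\; 0 . \] Moreover, the coefficient $1/\min(\operatorname{rk}AA^*,\operatorname{rk}BB^* )$ is best possible, in the sense that it cannot be replaced by a larger constant uniformly over all such $A,B$: there exist nonzero $A\in\mathbb{C}^{m\times\beta}$, $B\in\mathbb{C}^{n\times\beta}$ and $u\in\mathbb{C}^{mn}$ with $\mathrm{vec}(BA^T)^*u\neq 0$ such that $u^*(AA^*\otimes BB^* )u=\frac{1}{\min(\operatorname{rk}AA^*,\operatorname{rk}BB^* )}\,|\mathrm{vec}(BA^T)^*u|^2$.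
   Context: $A\otimes B$ denotes the standard Kronecker product (the block matrix whose $(i,j)$-th block is $a_{ij}B$). For $P\in\mathbb{C}^{n\times m}$, $\mathrm{vec}(P)\in\mathbb{C}^{mn}$ is the column vector obtained by stacking the columns of $P$ (so its entry in position $n(i_1-1)+i_2$ is $P_{i_2,i_1}$). $\operatorname{rk}$ denotes rank, $X^*$ the conjugate transpose, $X^T$ the transpose. For Hermitian matrices, $X\succcurlyeq Y$ (Loewner order) means $X-Y$ is positive semidefinite. *)

(* Defs.v *)
From mathcomp Require Import all_boot all_order all_algebra.
From mathcomp Require Import complex mxtens.
From mathcomp Require Import reals.
Set Implicit Arguments. Unset Strict Implicit. Unset Printing Implicit Defensive.
Import Order.TTheory GRing.Theory Num.Theory.
Local Open Scope ring_scope.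

Definition ctr {C : numClosedFieldType} {p q : nat} (X : 'M[C]_(p, q)) : 'M[C]_(q, p) :=
  (map_mx Num.conj X)^T.

(* vec P for P : n x m : column-stacking, entry at index n*i1 + i2 is P i2 i1
   (0-based); mxvec is row-major, so vec P = (mxvec P^T)^T. *)
Definition vec {C : numClosedFieldType} {n m : nat} (P : 'M[C]_(n, m)) : 'cV[C]_(m * n) :=
  (mxvec P^T)^T.

Definition psdmx {C : numClosedFieldType} {k : nat} (X : 'M[C]_k) : Prop :=
  ctr X = X /\ forall u : 'cV[C]_k, 0 <= (ctr u *m X *m u) ord0 ord0.

Definition loewner_ge {C : numClosedFieldType} {k : nat} (X Y : 'M[C]_k) : Prop :=
  psdmx (X - Y).

(* Main.v *)
Require Import Defs.
From mathcomp Require Import all_boot all_order all_algebra.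
From mathcomp Require Import complex mxtens.
From mathcomp Require Import reals.
From mathcomp Require Import sesquilinear spectral.
From mathcomp Require Import ring zify.
Import Order.TTheory GRing.Theory Num.Theory.
Local Open Scope ring_scope.
Lemma index_allpairs (T1 T2 : eqType) (s : seq T1) (t : seq T2) x y :
  x \in s -> y \in t ->
  index (x, y) [seq (a, b) | a <- s, b <- t] = (index x s * size t + index y t)%N.
Proof.
elim: s => //= a s IH; rewrite inE => xs yt.
rewrite ?allpairs_cons index_cat.
have [->|nxa] := eqVneq x a.
  rewrite map_f //=.
  by rewrite (index_map (fun b1 b2 (h : (a, b1) = (a, b2)) => congr1 snd h)).
have xs' : x \in s by move: xs; rewrite (negPf nxa).
have -> : (x, y) \in [seq (a, b) | b <- t] = false.
  by apply/negP => /mapP [b _ [E _]]; move: nxa; rewrite E eqxx.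
rewrite size_map IH // mulSn addnA.
by [].
Qed.

Lemma mxvec_indexE m n (i : 'I_m) (j : 'I_n) : mxvec_index i j = mxtens_index (i, j).
Proof.
apply: val_inj => /=.
rewrite /enum_rank enum_rank_in.unlock insubdK.
  rewrite enumT unlock /= /prod_enum index_allpairs ?mem_enum //.
  by rewrite !index_enum_ord size_enum_ord.
by rewrite cardE [_ \in _]index_mem mem_enum.
Qed.

Section S.
Variable C : numClosedFieldType.
Implicit Types p q r s : nat.
Lemma ctrM p q r (X : 'M[C]_(p,q)) (Y : 'M[C]_(q,r)) : ctr (X *m Y) = ctr Y *m ctr X.
Proof. by rewrite /ctr map_mxM trmx_mul. Qed.
Lemma ctrK p q (X : 'M[C]_(p,q)) : ctr (ctr X) = X.
Proof. by apply/matrixP=> i j; rewrite !mxE conjCK. Qed.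
Lemma ctrT p q r s (X : 'M[C]_(p,q)) (Y : 'M[C]_(r,s)) : ctr (X *t Y) = ctr X *t ctr Y.
Proof. by rewrite /ctr map_mxT trmx_tens. Qed.
Lemma ctrB p q (X Y : 'M[C]_(p,q)) : ctr (X - Y) = ctr X - ctr Y.
Proof. by apply/matrixP=> i j; rewrite !mxE rmorphB. Qed.
Lemma ctrZ p q a (X : 'M[C]_(p,q)) : ctr (a *: X) = a^* *: ctr X.
Proof. by apply/matrixP=> i j; rewrite !mxE rmorphM. Qed.
Lemma ctr0 p q : ctr (0 : 'M[C]_(p,q)) = 0.
Proof. by apply/matrixP=> i j; rewrite !mxE rmorph0. Qed.
Lemma ctr1 p : ctr (1%:M : 'M[C]_p) = 1%:M.
Proof. by apply/matrixP=> i j; rewrite !mxE rmorphMn rmorph1 eq_sym. Qed.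
Lemma ctrTr p q (X : 'M[C]_(p,q)) : ctr (X^T) = (ctr X)^T.
Proof. by apply/matrixP=> i j; rewrite !mxE. Qed.
Lemma ctr_tstar p q (X : 'M[C]_(p,q)) : ctr X = map_mx Num.conj (X^T).
Proof. by apply/matrixP=> i j; rewrite !mxE. Qed.

Lemma norm_ge0 k (x : 'cV[C]_k) : 0 <= (ctr x *m x) 0 0.
Proof. by rewrite mxE sumr_ge0 // => i _; rewrite !mxE mulrC mul_conjC_ge0. Qed.

Lemma cs k (x y : 'cV[C]_k) :
  `|(ctr x *m y) 0 0| ^+ 2 <= (ctr x *m x) 0 0 * (ctr y *m y) 0 0.
Proof.
have E : forall a b : 'cV[C]_k, (ctr a *m b) 0 0 = dotmx b^T a^T.
  by move=> a b; rewrite dotmxE !mxE; apply: eq_bigr => i _; rewrite !mxE mulrC.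
rewrite !E mulrC.
by have [+ _] := CauchySchwarz (@dotmx C k) y^T x^T.
Qed.
End S.
Section S2.
Variable C : numClosedFieldType.
Lemma sum_tens p q (F : 'I_(p * q) -> C) :
  \sum_k F k = \sum_(a < p) \sum_(b < q) F (mxtens_index (a, b)).
Proof.
rewrite pair_big /= (reindex (@mxtens_index p q)) /=.
  by apply: eq_bigr => -[a b].
by exists (@mxtens_unindex p q) => k _; rewrite ?mxtens_indexK ?mxtens_unindexK.
Qed.

Lemma vecE n m (P : 'M[C]_(n, m)) i j : vec P (mxtens_index (i, j)) 0 = P j i.
Proof. by rewrite /vec mxE -mxvec_indexE mxvecE mxE. Qed.

Lemma vec_mul m n b c (A : 'M[C]_(m, b)) (B : 'M[C]_(n, c)) (X : 'M[C]_(c, b)) :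
  vec (B *m X *m A^T) = (A *t B) *m vec X.
Proof.
apply/matrixP => k l; rewrite [l]ord1; case: (mxtens_indexP k) => i j.
rewrite vecE [RHS]mxE sum_tens !mxE; apply: eq_bigr => a _.
rewrite !mxE big_distrl /=; apply: eq_bigr => d _.
by rewrite tensmxE vecE; ring.
Qed.

Lemma vec_norm n m (P : 'M[C]_(n, m)) : (ctr (vec P) *m vec P) 0 0 = \tr (P *m ctr P).
Proof.
rewrite mxE sum_tens /mxtrace exchange_big /=; apply: eq_bigr => i _.
rewrite mxE; apply: eq_bigr => j _.
by rewrite /ctr 2!mxE !vecE !mxE mulrC.
Qed.
End S2.
Section S3.
Variable C : numClosedFieldType.

Lemma row_norm0 k (y : 'rV[C]_k) : (y *m ctr y) 0 0 = 0 -> y = 0.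
Proof.
rewrite mxE => /psumr_eq0P H; apply/rowP => i; rewrite mxE.
have Hp : forall j, true -> 0 <= y 0 j * ctr y j 0.
  by move=> j _; rewrite /ctr !mxE mul_conjC_ge0.
have := H Hp i isT; rewrite /ctr !mxE => /eqP; rewrite mul_conjC_eq0 => /eqP.
done.
Qed.

Lemma rank_le_mulctr m b (A : 'M[C]_(m, b)) : (\rank A <= \rank (A *m ctr A))%N.
Proof.
have sK : (kermx (A *m ctr A) <= kermx A)%MS.
  apply/sub_kermxP; apply/row_matrixP => i; rewrite row_mul row0.
  have /sub_kermxP : (row i (kermx (A *m ctr A)) <= kermx (A *m ctr A))%MS by apply: row_sub.
  set x := row i _ => hx; apply: row_norm0.
  by rewrite ctrM mulmxA -(mulmxA x) hx mul0mx mxE.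
have := mxrankS sK; rewrite !mxrank_ker.
have := rank_leq_row A; have := rank_leq_row (A *m ctr A).
move: (\rank A) (\rank (A *m ctr A)) => x y; lia.
Qed.

Lemma proj_exists m b (A : 'M[C]_(m, b)) : exists P : 'M[C]_b,
  [/\ ctr P = P, P *m P = P, A *m P = A & \tr P = (\rank A)%:R].
Proof.
set Q := schmidt (row_base A).
have hQ : Q *m ctr Q = 1%:M.
  have /unitarymxP := schmidt_unitarymx (row_base A) (rank_leq_col A).
  by rewrite ctr_tstar.
exists (ctr Q *m Q); split.
- by rewrite ctrM ctrK.
- by rewrite mulmxA -(mulmxA (ctr Q)) hQ mulmx1.
- have : (A <= Q)%MS by rewrite /Q (eqmx_schmidt_free (row_base_free A)) eq_row_base.
  case/submxP => D hA.
  have E := f_equal (fun X => X *m (ctr Q *m Q)) hA; rewrite /= in E.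
  by rewrite E mulmxA -(mulmxA D) hQ mulmx1; exact: esym hA.
- by rewrite mxtrace_mulC hQ mxtrace1.
Qed.
End S3.
Section S4.
Variable C : numClosedFieldType.

Lemma cs_proj k (S : 'M[C]_k) (e w : 'cV[C]_k) : ctr S = S -> S *m w = w ->
  `|(ctr e *m w) 0 0| ^+ 2 <= (ctr (S *m e) *m (S *m e)) 0 0 * (ctr w *m w) 0 0.
Proof.
move=> hS hw.
have -> : ctr e *m w = ctr (S *m e) *m w by rewrite ctrM hS -mulmxA hw.
exact: cs.
Qed.

Lemma main_ineq m n b (A : 'M[C]_(m, b)) (B : 'M[C]_(n, b)) (u : 'cV[C]_(m * n)) :
  let w := ctr (A *t B) *m u in
  let e := vec (1%:M : 'M[C]_b) in
  `|(ctr e *m w) 0 0| ^+ 2 <= (\rank A)%:R * (ctr w *m w) 0 0 /\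
  `|(ctr e *m w) 0 0| ^+ 2 <= (\rank B)%:R * (ctr w *m w) 0 0.
Proof.
move=> w e; split.
- have [P [hPh hPP hAP htr]] := @proj_exists C _ _ A.
  have hS : ctr (P *t (1%:M : 'M[C]_b)) = P *t 1%:M by rewrite ctrT hPh ctr1.
  have hw : (P *t 1%:M) *m w = w.
    rewrite /w mulmxA ctrT tensmx_mul mul1mx.
    by rewrite -[P]ctrK -ctrM hPh hAP.
  have := @cs_proj _ _ e _ hS hw.
  rewrite -vec_mul !mul1mx vec_norm ctrTr hPh -trmx_mul mxtrace_tr hPP htr.
  by [].
- have [P [hPh hPP hAP htr]] := @proj_exists C _ _ B.
  have hS : ctr ((1%:M : 'M[C]_b) *t P) = 1%:M *t P by rewrite ctrT hPh ctr1.
  have hw : (1%:M *t P) *m w = w.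
    rewrite /w mulmxA ctrT tensmx_mul mul1mx.
    by rewrite -[P]ctrK -ctrM hPh hAP.
  have := @cs_proj _ _ e _ hS hw.
  rewrite -vec_mul trmx1 !mulmx1 vec_norm hPh hPP htr.
  by [].
Qed.
End S4.
Section S5.
Variable C : numClosedFieldType.

Lemma ctr_delta p q (i : 'I_p) (j : 'I_q) : ctr (delta_mx i j : 'M[C]_(p, q)) = delta_mx j i.
Proof. by rewrite /ctr map_delta_mx trmx_delta. Qed.

Lemma tr_delta k (i : 'I_k) : \tr (delta_mx i i : 'M[C]_k) = 1.
Proof.
rewrite /mxtrace (bigD1 i) //= big1 ?addr0; first by rewrite mxE !eqxx.
by move=> j /negPf nji; rewrite mxE nji.
Qed.

Lemma ctr_entry p q (X : 'M[C]_(p, q)) i j : ctr X j i = (X i j)^*.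
Proof. by rewrite /ctr !mxE. Qed.

Lemma quad_vv k (v u : 'cV[C]_k) :
  (ctr u *m (v *m ctr v) *m u) 0 0 = `|(ctr v *m u) 0 0| ^+ 2.
Proof.
have -> : ctr u *m (v *m ctr v) *m u = (ctr u *m v) *m (ctr v *m u) by rewrite !mulmxA.
rewrite [LHS]mxE big_ord1.
have -> : (ctr u *m v) 0 0 = ((ctr v *m u) 0 0)^* by rewrite -ctr_entry ctrM ctrK.
by rewrite normCK mulrC.
Qed.

Lemma herm_K m n b (A : 'M[C]_(m, b)) (B : 'M[C]_(n, b)) :
  ctr ((A *m ctr A) *t (B *m ctr B)) = (A *m ctr A) *t (B *m ctr B).
Proof. by rewrite ctrT !ctrM !ctrK. Qed.

Lemma herm_vv k (v : 'cV[C]_k) : ctr (v *m ctr v) = v *m ctr v.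
Proof. by rewrite ctrM ctrK. Qed.

Lemma mxBE p q (X Y : 'M[C]_(p, q)) i j : (X - Y) i j = X i j - Y i j.
Proof. by rewrite !mxE. Qed.
Lemma mxZE p q a (X : 'M[C]_(p, q)) i j : (a *: X) i j = a * X i j.
Proof. by rewrite !mxE. Qed.

Lemma part1 m n b (A : 'M[C]_(m, b)) (B : 'M[C]_(n, b)) :
     let c := ((minn (\rank (A *m ctr A)) (\rank (B *m ctr B)))%:R)^-1 in
     let v := vec (B *m A^T) in
     loewner_ge ((A *m ctr A) *t (B *m ctr B)) (c *: (v *m ctr v)) /\
     loewner_ge (c *: (v *m ctr v)) 0.
Proof.
move=> c v.
pose N := minn (\rank (A *m ctr A)) (\rank (B *m ctr B)).
have cR : c^* = c by rewrite /c fmorphV rmorph_nat.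
have c0 : 0 <= c by rewrite /c invr_ge0 ler0n.
set e := vec (1%:M : 'M[C]_b).
have hv : v = (A *t B) *m e by rewrite /v -vec_mul mulmx1.
have hK : (A *m ctr A) *t (B *m ctr B) = (A *t B) *m ctr (A *t B)
  by rewrite ctrT tensmx_mul.
have Q (u : 'cV[C]_(m * n)) : (ctr u *m ((A *m ctr A) *t (B *m ctr B)) *m u) 0 0 =
           (ctr (ctr (A *t B) *m u) *m (ctr (A *t B) *m u)) 0 0.
  by rewrite hK ctrM ctrK !mulmxA.
have Z (u : 'cV[C]_(m * n)) : (ctr v *m u) 0 0 = (ctr e *m (ctr (A *t B) *m u)) 0 0.
  by rewrite hv ctrM mulmxA.
have hq (u : 'cV[C]_(m * n)) : 0 <= (ctr (ctr (A *t B) *m u) *m (ctr (A *t B) *m u)) 0 0 by exact: (@norm_ge0 C _ (ctr (A *t B) *m u)).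
have key (u : 'cV[C]_(m * n)) : c * `|(ctr v *m u) 0 0| ^+ 2 <=
    (ctr u *m ((A *m ctr A) *t (B *m ctr B)) *m u) 0 0.
  rewrite Q Z.
  set q := (ctr (ctr (A *t B) *m u) *m (ctr (A *t B) *m u)) 0 0.
  set z := `|(ctr e *m _) 0 0| ^+ 2.
  have [hA hB] := @main_ineq C _ _ _ A B u.
  have hqq : 0 <= q by apply: hq.
  have hN : z <= N%:R * q.
    case: (leqP (\rank (A *m ctr A)) (\rank (B *m ctr B))) => h.
    + have -> : N = \rank (A *m ctr A) by apply/minn_idPl.
      apply: (le_trans hA); apply: ler_wpM2r => //.
      by rewrite ler_nat rank_le_mulctr.
    + have -> : N = \rank (B *m ctr B) by apply/minn_idPr/ltnW.
      apply: (le_trans hB); apply: ler_wpM2r => //.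
      by rewrite ler_nat rank_le_mulctr.
  have [N0|Npos] := eqVneq N 0%N.
    have -> : c = N%:R^-1 by [].
    by rewrite N0 invr0 mul0r.
  apply: (le_trans (ler_wpM2l c0 hN)).
  have -> : c = N%:R^-1 by [].
  by rewrite mulrA mulVf ?mul1r // pnatr_eq0.
split; split.
- by rewrite ctrB herm_K ctrZ herm_vv cR.
- move=> u; rewrite mulmxBr mulmxBl mxBE subr_ge0.
  by rewrite -scalemxAr -scalemxAl mxZE quad_vv key.
- by rewrite subr0 ctrZ herm_vv cR.
- move=> u; rewrite subr0 -scalemxAr -scalemxAl mxZE quad_vv.
  by rewrite mulr_ge0 // exprn_ge0.
Qed.
End S5.
Section S6.
Variable C : numClosedFieldType.

Lemma part2 m n b : (0 < m)%N -> (0 < n)%N -> (0 < b)%N ->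
  (exists (A : 'M[C]_(m, b)) (B : 'M[C]_(n, b)) (u : 'cV[C]_(m * n)),
     let c := ((minn (\rank (A *m ctr A)) (\rank (B *m ctr B)))%:R)^-1 in
     let v := vec (B *m A^T) in
     [/\ A != 0, B != 0, (ctr v *m u) ord0 ord0 != 0 &
         (ctr u *m ((A *m ctr A) *t (B *m ctr B)) *m u) ord0 ord0
           = c * `|(ctr v *m u) ord0 ord0| ^+ 2]).
Proof.
case: m => // m; case: n => // n; case: b => // b _ _ _.
pose A : 'M[C]_(m.+1, b.+1) := delta_mx 0 0.
pose B : 'M[C]_(n.+1, b.+1) := delta_mx 0 0.
exists A, B, (vec (B *m A^T)) => c v.
have hAA : A *m ctr A = delta_mx 0 0 by rewrite ctr_delta mul_delta_mx.
have hBB : B *m ctr B = delta_mx 0 0 by rewrite ctr_delta mul_delta_mx.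
have hc : c = 1 by rewrite /c hAA hBB !mxrank_delta /= invr1.
have hBA : B *m A^T = delta_mx 0 0 by rewrite trmx_delta mul_delta_mx.
have hz : (ctr v *m v) 0 0 = 1.
  by rewrite vec_norm hBA ctr_delta mul_delta_mx tr_delta.
have nz p q (i : 'I_p) (j : 'I_q) : (delta_mx i j : 'M[C]_(p, q)) != 0.
  by apply/eqP => /matrixP/(_ i j); rewrite !mxE !eqxx /= => /eqP; rewrite oner_eq0.
split; [exact: nz | exact: nz | by rewrite hz oner_eq0 |].
rewrite hz normr1 expr1n mulr1 hc.
set e := vec (1%:M : 'M[C]_b.+1).
have hv : v = (A *t B) *m e by rewrite /v -vec_mul mulmx1.
have hK : (A *m ctr A) *t (B *m ctr B) = (A *t B) *m ctr (A *t B)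
  by rewrite ctrT tensmx_mul.
have hw : ctr (A *t B) *m v = vec (delta_mx 0 0 : 'M[C]_b.+1).
  rewrite hv mulmxA ctrT tensmx_mul -vec_mul mulmx1 ctr_delta mul_delta_mx.
  by rewrite ctr_delta mul_delta_mx trmx_delta mul_delta_mx.
rewrite hK.
have -> : ctr v *m (A *t B *m ctr (A *t B)) *m v =
    ctr (ctr (A *t B) *m v) *m (ctr (A *t B) *m v) by rewrite ctrM ctrK !mulmxA.
by rewrite hw vec_norm ctr_delta mul_delta_mx tr_delta.
Qed.
End S6.
Local Open Scope complex_scope.

Theorem theorem1p3 (R : realType) (m n b : nat) :
  (0 < m)%N -> (0 < n)%N -> (0 < b)%N ->
  (forall (A : 'M[R[i]]_(m, b)) (B : 'M[R[i]]_(n, b)), A != 0 -> B != 0 ->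
     let c := ((minn (\rank (A *m ctr A)) (\rank (B *m ctr B)))%:R)^-1 in
     let v := vec (B *m A^T) in
     loewner_ge ((A *m ctr A) *t (B *m ctr B)) (c *: (v *m ctr v)) /\
     loewner_ge (c *: (v *m ctr v)) 0)
  /\
  (exists (A : 'M[R[i]]_(m, b)) (B : 'M[R[i]]_(n, b)) (u : 'cV[R[i]]_(m * n)),
     let c := ((minn (\rank (A *m ctr A)) (\rank (B *m ctr B)))%:R)^-1 in
     let v := vec (B *m A^T) in
     [/\ A != 0, B != 0, (ctr v *m u) ord0 ord0 != 0 &
         (ctr u *m ((A *m ctr A) *t (B *m ctr B)) *m u) ord0 ord0
           = c * `|(ctr v *m u) ord0 ord0| ^+ 2]).
Proof.
move=> hm hn hb; split.
  by move=> A B _ _; exact: part1.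
exact: part2.
Qed.
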